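(* Let $(X,f)$ be a dynamical system, $r\in\mathbb{N}$, and $\mathbf{a}=(a_1,\dots,a_{r+1})\in\mathbb{N}^{r+1}_*$. Then $\overline{Orb(\Delta_{X^{r+1}},f^{(\mathbf{a})})}=X^{r+1}$ if and only if $(X,f)$ is $\Delta$-$\mathbf{a}'$-transitive, where $\mathbf{a}'=(a_2-a_1,a_3-a_1,\dots,a_{r+1}-a_1)$.
   Context: A dynamical system is a pair $(X,f)$ with $X$ a compact metric space and $f:X\to X$ continuous. $\mathbb{N}^m_*=\{(n_1,\dots,n_m)\in\mathbb{N}^m: n_1<\dots<n_m\}$. For $\mathbf{a}\in\mathbb{N}^m$, $f^{(\mathbf{a})}=f^{a_1}\times\dots\times f^{a_m}:X^m\to X^m$. $\Delta_{X^m}=\{(x,\dots,x):x\in X\}$. For a map $g$ and set $A$, $Orb(A,g)=\bigcup_{n\ge0}g^n(A)$. For a system $(Y,g)$, $y$ is a transitive point if its $\omega$-limit set equals $Y$. $(X,f)$ is $\Delta$-$\mathbf{b}$-transitive ($\mathbf{b}\in\mathbb{N}^r$) if there is $x\in X$ such that $(x,\dots,x)$ is a transitive point of $(X^r,f^{(\mathbf{b})})$. *)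

(* Defs.v *)
From Stdlib Require Import Reals Arith.
Open Scope R_scope.

Record is_metric {X : Type} (d : X -> X -> R) : Prop := {
  metric_nonneg : forall x y, 0 <= d x y;
  metric_eq0 : forall x y, d x y = 0 <-> x = y;
  metric_sym : forall x y, d x y = d y x;
  metric_triangle : forall x y z, d x z <= d x y + d y z
}.

(* Sequential compactness (equivalent to compactness for metric spaces). *)
Definition seq_compact {X : Type} (d : X -> X -> R) : Prop :=
  forall u : nat -> X, exists (phi : nat -> nat) (l : X),
    (forall n m, (n < m)%nat -> (phi n < phi m)%nat) /\
    (forall eps, eps > 0 -> exists N, forall n, (N <= n)%nat -> d (u (phi n)) l < eps).

Definition compact_metric_space {X : Type} (d : X -> X -> R) : Prop :=
  is_metric d /\ seq_compact d.

Definition continuous_map {X : Type} (d : X -> X -> R) (f : X -> X) : Prop :=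
  forall x eps, eps > 0 -> exists delta, delta > 0 /\
    forall y, d x y < delta -> d (f x) (f y) < eps.

(* Points of X^m are represented as functions nat -> X, only the
   coordinates i < m being relevant; X^m carries the product topology,
   given by the max-metric on the coordinates i < m. *)

Definition prodmap {X : Type} (a : nat -> nat) (f : X -> X) (u : nat -> X) : nat -> X :=
  fun i => Nat.iter (a i) f (u i).

Definition diagonal {X : Type} (u : nat -> X) : Prop :=
  exists x : X, forall i, u i = x.

Definition Orb {Y : Type} (A : Y -> Prop) (g : Y -> Y) (y : Y) : Prop :=
  exists (n : nat) (v : Y), A v /\ y = Nat.iter n g v.

Definition in_closure {X : Type} (d : X -> X -> R) (m : nat)
    (S : (nat -> X) -> Prop) (y : nat -> X) : Prop :=
  forall eps, eps > 0 -> exists u, S u /\ forall i, (i < m)%nat -> d (u i) (y i) < eps.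

Definition omega_limit {X : Type} (d : X -> X -> R) (m : nat)
    (g : (nat -> X) -> (nat -> X)) (y z : nat -> X) : Prop :=
  forall eps, eps > 0 -> forall N : nat, exists n, (N <= n)%nat /\
    forall i, (i < m)%nat -> d (Nat.iter n g y i) (z i) < eps.

Definition transitive_point {X : Type} (d : X -> X -> R) (m : nat)
    (g : (nat -> X) -> (nat -> X)) (y : nat -> X) : Prop :=
  forall z : nat -> X, omega_limit d m g y z.

Definition Delta_transitive {X : Type} (d : X -> X -> R) (f : X -> X)
    (r : nat) (b : nat -> nat) : Prop :=
  exists x : X, transitive_point d r (prodmap b f) (fun _ => x).

Definition strictly_increasing_tuple (m : nat) (a : nat -> nat) : Prop :=
  forall i j, (i < j)%nat -> (j < m)%nat -> (a i < a j)%nat.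

(* Main.v *)
Require Import Defs.
From Stdlib Require Import Reals Arith Lra Lia List Classical ClassicalEpsilon.
Open Scope R_scope.

Lemma fchoice {A B : Type} (P : A -> B -> Prop) :
  (forall a, exists b, P a b) -> exists g, forall a, P a (g a).
Proof.
  intros H. exists (fun a => proj1_sig (constructive_indefinite_description _ (H a))).
  intro a. exact (proj2_sig _).
Qed.

Lemma iter_add {X : Type} (f : X -> X) n m x :
  Nat.iter (n + m) f x = Nat.iter n f (Nat.iter m f x).
Proof. induction n; simpl; congruence. Qed.

Lemma iter_comm {X : Type} (f : X -> X) n x : Nat.iter n f (f x) = f (Nat.iter n f x).
Proof. induction n; simpl; congruence. Qed.

Lemma iter_prodmap {X : Type} (b : nat -> nat) (f : X -> X) n u i :
  Nat.iter n (prodmap b f) u i = Nat.iter (n * b i) f (u i).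
Proof.
  induction n; simpl. reflexivity.
  unfold prodmap at 1. rewrite IHn. rewrite <- iter_add. f_equal.
Qed.

Lemma iter_swap {X : Type} (f : X -> X) n m x :
  Nat.iter n f (Nat.iter m f x) = Nat.iter m f (Nat.iter n f x).
Proof. rewrite <- !iter_add. f_equal. lia. Qed.

Lemma cont_iter {X : Type} (d : X -> X -> R) f (Hf : continuous_map d f) n :
  continuous_map d (Nat.iter n f).
Proof.
  induction n; intros x eps He.
  - exists eps; split; auto.
  - simpl. destruct (Hf (Nat.iter n f x) eps He) as [d1 [Hd1 H1]].
    destruct (IHn x d1 Hd1) as [d2 [Hd2 H2]].
    exists d2; split; auto.
Qed.

Lemma fin_delta (m : nat) (P : nat -> R -> Prop)
  (Hmono : forall i e e', 0 < e' <= e -> P i e -> P i e') :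
  (forall i, (i < m)%nat -> exists e, e > 0 /\ P i e) ->
  exists e, e > 0 /\ forall i, (i < m)%nat -> P i e.
Proof.
  induction m; intros H.
  - exists 1; split; [lra | intros; lia].
  - destruct IHm as [e1 [He1 H1]]. { intros i Hi; apply H; lia. }
    destruct (H m ltac:(lia)) as [e2 [He2 H2]].
    exists (Rmin e1 e2); split. { apply Rmin_glb_lt; lra. }
    intros i Hi. destruct (Nat.eq_dec i m) as [->|Hne].
    + apply (Hmono m e2); auto. split. apply Rmin_glb_lt; lra. apply Rmin_r.
    + apply (Hmono i e1). split. apply Rmin_glb_lt; lra. apply Rmin_l. apply H1; lia.
Qed.

Lemma phi_ge (phi : nat -> nat) :
  (forall n m, (n < m)%nat -> (phi n < phi m)%nat) -> forall n, (n <= phi n)%nat.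
Proof.
  intros H n; induction n. lia. specialize (H n (S n) ltac:(lia)). lia.
Qed.

Lemma le_of_eps a b : (forall eps, eps > 0 -> a < b + eps) -> a <= b.
Proof.
  intros H. destruct (Rle_or_lt a b) as [h|h]; auto.
  specialize (H (a - b) ltac:(lra)). lra.
Qed.

Lemma inv_small eps : eps > 0 -> exists M, forall k, (M <= k)%nat -> / INR (S k) < eps.
Proof.
  intros He. destruct (archimed_cor1 eps He) as [M [HM HM0]].
  exists M. intros k Hk. eapply Rle_lt_trans; [|exact HM].
  apply Rinv_le_contravar. apply lt_0_INR; lia. apply le_INR; lia.
Qed.

Lemma inv_pos k : / INR (S k) > 0.
Proof. apply Rinv_0_lt_compat. apply lt_0_INR; lia. Qed.

Lemma img_closed {X : Type} (d : X -> X -> R) f (HX : compact_metric_space d)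
  (Hf : continuous_map d f) p :
  (forall eps, eps > 0 -> exists z, d p (f z) < eps) -> exists z, f z = p.
Proof.
  intros H. destruct HX as [Hm Hsc].
  destruct (fchoice (fun n z => d p (f z) < / INR (S n))) as [u Hu].
  { intro n. apply H. apply inv_pos. }
  destruct (Hsc u) as [phi [l [Hphi Hl]]].
  exists l. apply (metric_eq0 d Hm). rewrite (metric_sym d Hm).
  apply Rle_antisym; [|apply (metric_nonneg d Hm)].
  apply le_of_eps. intros eps He. rewrite Rplus_0_l.
  destruct (Hf l (eps/2) ltac:(lra)) as [del [Hdel Hc]].
  destruct (Hl del Hdel) as [N HN].
  destruct (inv_small (eps/2) ltac:(lra)) as [M HM].
  set (n := Nat.max N M).
  specialize (HN n ltac:(lia)).
  pose proof (phi_ge phi Hphi n).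
  specialize (HM (phi n) ltac:(lia)). specialize (Hu (phi n)).
  specialize (Hc (u (phi n))). rewrite (metric_sym d Hm l) in Hc. specialize (Hc HN).
  pose proof (metric_triangle d Hm p (f (u (phi n))) (f l)).
  rewrite (metric_sym d Hm (f l)) in Hc. lra.
Qed.

Lemma surj_iter {X : Type} (f : X -> X) (Hs : forall y, exists z, f z = y) n y :
  exists z, Nat.iter n f z = y.
Proof.
  revert y; induction n; intros y. exists y; reflexivity.
  destruct (IHn y) as [z' Hz']. destruct (Hs z') as [z Hz].
  exists z. simpl. rewrite <- iter_comm. subst; auto.
Qed.
Fixpoint build {X : Type} (g : list X -> X) (n : nat) : list X :=
  match n with 0 => nil | S n => g (build g n) :: build g n end.

Lemma build_in {X : Type} (g : list X -> X) m n : (m < n)%nat -> In (g (build g m)) (build g n).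
Proof.
  induction n; intros H. lia. simpl. destruct (Nat.eq_dec m n) as [->|]. left; auto.
  right; apply IHn; lia.
Qed.

Lemma finite_net {X : Type} (d : X -> X -> R) (HX : compact_metric_space d) eps :
  eps > 0 -> exists L : list X, forall x, exists p, In p L /\ d p x < eps.
Proof.
  intros He. destruct HX as [Hm Hsc]. apply NNPP; intro Hno.
  assert (H1 : forall L : list X, exists x, forall p, In p L -> d p x >= eps).
  { intro L. apply NNPP; intro H. apply Hno. exists L. intro x. apply NNPP; intro Hc.
    apply H. exists x. intros p Hp. destruct (Rlt_or_le (d p x) eps); [|lra].
    exfalso; apply Hc; eauto. }
  destruct (fchoice _ H1) as [g Hg].
  destruct (Hsc (fun n => g (build g n))) as [phi [l [Hphi Hl]]].
  destruct (Hl (eps/2) ltac:(lra)) as [N HN].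
  pose proof (HN N (le_n _)) as A. pose proof (HN (S N) ltac:(lia)) as B.
  pose proof (Hg (build g (phi (S N))) (g (build g (phi N))) (build_in g _ _ (Hphi N (S N) ltac:(lia)))) as C.
  pose proof (metric_triangle d Hm (g (build g (phi N))) l (g (build g (phi (S N))))).
  rewrite (metric_sym d Hm l) in H. lra.
Qed.

Fixpoint tuples {X : Type} (x0 : X) (F : list X) (j : nat) : list (nat -> X) :=
  match j with
  | 0 => (fun _ => x0) :: nil
  | S j => flat_map (fun t => map (fun p => fun i => if Nat.eqb i j then p else t i) F)
                    (tuples x0 F j)
  end.

Lemma tuples_net {X : Type} (d : X -> X -> R) x0 F eps :
  (forall x, exists p, In p F /\ d p x < eps) ->
  forall j (z : nat -> X), exists t, In t (tuples x0 F j) /\ forall i, (i < j)%nat -> d (t i) (z i) < eps.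
Proof.
  intros HF j z. induction j.
  - exists (fun _ => x0). split. left; auto. intros; lia.
  - destruct IHj as [t [Ht Hd]]. destruct (HF (z j)) as [p [Hp Hpd]].
    exists (fun i => if Nat.eqb i j then p else t i). split.
    + simpl. apply in_flat_map. exists t. split; auto. apply in_map_iff. exists p; auto.
    + intros i Hi. destruct (Nat.eqb i j) eqn:E.
      * apply Nat.eqb_eq in E; subst; auto.
      * apply Nat.eqb_neq in E. apply Hd; lia.
Qed.

Definition op {X : Type} (d : X -> X -> R) (P : X -> Prop) :=
  forall x, P x -> exists r, r > 0 /\ forall y, d x y < r -> P y.
Definition dn {X : Type} (d : X -> X -> R) (P : X -> Prop) :=
  forall x r, r > 0 -> exists y, d x y < r /\ P y.

Fixpoint seqrec {A : Type} (s : nat -> A -> A) (a0 : A) (n : nat) : A :=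
  match n with 0 => a0 | S n => s n (seqrec s a0 n) end.

Lemma baire {X : Type} (d : X -> X -> R) (x0 : X) (HX : compact_metric_space d)
  (G : nat -> X -> Prop) (Hop : forall k, op d (G k)) (Hdn : forall k, dn d (G k)) :
  exists x, forall k, G k x.
Proof.
  destruct HX as [Hm Hsc].
  assert (step : forall kc : nat * (X * R), exists cr' : X * R,
    snd (snd kc) > 0 -> snd cr' > 0 /\ forall w, d (fst cr') w <= snd cr' ->
      d (fst (snd kc)) w <= snd (snd kc) /\ G (fst kc) w).
  { intros [k [c rho]]; simpl.
    destruct (Rlt_or_le 0 rho) as [Hr|Hr].
    - destruct (Hdn k c (rho/2) ltac:(lra)) as [y [Hy Gy]].
      destruct (Hop k y Gy) as [sig [Hsig Hs]].
      exists (y, Rmin sig (rho/2) / 2). simpl. intros _.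
      assert (0 < Rmin sig (rho/2)) by (apply Rmin_glb_lt; lra).
      pose proof (Rmin_l sig (rho/2)). pose proof (Rmin_r sig (rho/2)).
      split. lra. intros w Hw. split.
      + pose proof (metric_triangle d Hm c y w). lra.
      + apply Hs. lra.
    - exists (c, rho). simpl. intros; lra. }
  destruct (fchoice _ step) as [s Hs].
  set (cr := seqrec (fun k c => s (k, c)) (x0, 1)).
  assert (Hpos : forall k, snd (cr k) > 0).
  { induction k. simpl; lra. simpl. apply (Hs (k, cr k)); auto. }
  assert (Hnest : forall k j w, d (fst (cr (j + k)%nat)) w <= snd (cr (j + k)%nat) ->
                    d (fst (cr k)) w <= snd (cr k)).
  { intros k j; induction j; intros w Hw. exact Hw. apply IHj.
    simpl in Hw. apply (Hs ((j + k)%nat, cr (j + k)%nat) (Hpos _)) in Hw. apply Hw. }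
  assert (HG : forall k w, d (fst (cr (S k))) w <= snd (cr (S k)) -> G k w).
  { intros k w Hw. simpl in Hw. apply (Hs (k, cr k) (Hpos _)) in Hw. apply Hw. }
  destruct (Hsc (fun n => fst (cr n))) as [phi [l [Hphi Hl]]].
  exists l. intro k. apply HG. apply le_of_eps. intros eps He.
  destruct (Hl eps He) as [N HN].
  set (n := Nat.max N (S k)). specialize (HN n ltac:(lia)).
  pose proof (phi_ge phi Hphi n).
  assert (E : phi n = ((phi n - S k) + S k)%nat) by lia.
  assert (A : d (fst (cr (S k))) (fst (cr (phi n))) <= snd (cr (S k))).
  { apply (Hnest (S k) (phi n - S k)%nat). rewrite <- E.
    rewrite (proj2 (metric_eq0 d Hm _ _) eq_refl). left; apply Hpos. }
  pose proof (metric_triangle d Hm (fst (cr (S k))) (fst (cr (phi n))) l). lra.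
Qed.

Lemma op_list {X : Type} (d : X -> X -> R) {T : Type} (P : T -> X -> Prop) (L : list T) :
  (forall t, In t L -> op d (P t)) -> op d (fun x => forall t, In t L -> P t x).
Proof.
  induction L as [|t0 L IH]; intros H x Hx.
  - exists 1; split; [lra|]. intros y _ t [].
  - destruct (H t0 (or_introl eq_refl) x (Hx t0 (or_introl eq_refl))) as [e1 [He1 H1]].
    destruct (IH (fun t Ht => H t (or_intror Ht)) x (fun t Ht => Hx t (or_intror Ht))) as [e2 [He2 H2]].
    exists (Rmin e1 e2). split. apply Rmin_glb_lt; lra.
    intros y Hy t [<-|Ht].
    + apply H1. pose proof (Rmin_l e1 e2); lra.
    + apply H2; auto. pose proof (Rmin_r e1 e2); lra.
Qed.

Lemma dn_list {X : Type} (d : X -> X -> R) (Hm : is_metric d) {T : Type} (P : T -> X -> Prop) (L : list T) :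
  (forall t, In t L -> op d (P t) /\ dn d (P t)) -> dn d (fun x => forall t, In t L -> P t x).
Proof.
  induction L as [|t0 L IH]; intros H x r Hr.
  - exists x. split. rewrite (proj2 (metric_eq0 d Hm _ _) eq_refl); auto. intros t [].
  - destruct (H t0 (or_introl eq_refl)) as [Ho Hd].
    destruct (Hd x r Hr) as [y [Hy Py]].
    destruct (Ho y Py) as [sig [Hsig Hs]].
    destruct (IH (fun t Ht => H t (or_intror Ht)) y (Rmin sig (r - d x y))) as [z [Hz Pz]].
    { apply Rmin_glb_lt; lra. }
    pose proof (Rmin_l sig (r - d x y)). pose proof (Rmin_r sig (r - d x y)).
    exists z. split. pose proof (metric_triangle d Hm x y z); lra.
    intros t [<-|Ht]. apply Hs; lra. auto.
Qed.

Lemma op_iter {X : Type} (d : X -> X -> R) (Hm : is_metric d) f (Hf : continuous_map d f) m t e :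
  op d (fun x => d (Nat.iter m f x) t < e).
Proof.
  intros x Hx; cbv beta in Hx |- *. destruct (cont_iter d f Hf m x (e - d (Nat.iter m f x) t) ltac:(lra)) as [del [Hdel H]].
  exists del; split; auto. intros y Hy. specialize (H y Hy).
  pose proof (metric_triangle d Hm (Nat.iter m f y) (Nat.iter m f x) t).
  rewrite (metric_sym d Hm (Nat.iter m f y) (Nat.iter m f x)) in H0. cbv beta; lra.
Qed.

Lemma op_forall_lt {X : Type} (d : X -> X -> R) (P : nat -> X -> Prop) m :
  (forall i, (i < m)%nat -> op d (P i)) -> op d (fun x => forall i, (i < m)%nat -> P i x).
Proof.
  intros H x Hx.
  assert (Hm' : forall i e e', 0 < e' <= e -> (forall y, d x y < e -> P i y) -> (forall y, d x y < e' -> P i y)).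
  { intros i e e' [h1 h2] Hp y Hy. apply Hp; lra. }
  assert (Hb : forall i, (i < m)%nat -> exists e, e > 0 /\ forall y, d x y < e -> P i y).
  { intros i Hi. destruct (H i Hi x (Hx i Hi)) as [e [He Hy]]. exists e; split; auto. }
  destruct (fin_delta m (fun i e => forall y, d x y < e -> P i y) Hm' Hb) as [e [He Hi]].
  exists e; split; auto.
Qed.

Theorem proposition5p8 (X : Type) (d : X -> X -> R) (x0 : X)
  (HX : compact_metric_space d) (f : X -> X) (Hf : continuous_map d f)
  (r : nat) (Hr : (1 <= r)%nat) (a : nat -> nat)
  (Ha : strictly_increasing_tuple (S r) a) (Ha0 : (1 <= a 0%nat)%nat) :
  (forall y : nat -> X, in_closure d (S r) (Orb diagonal (prodmap a f)) y)
  <-> Delta_transitive d f r (fun i => (a (S i) - a 0%nat)%nat).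
Proof.
  pose proof HX as [Hm Hsc].
  set (b := fun i => (a (S i) - a 0%nat)%nat).
  assert (Hab : forall i n, (i < r)%nat -> (n * b i + n * a 0 = n * a (S i))%nat).
  { intros i n Hi. assert (a 0 < a (S i))%nat by (apply Ha; lia).
    unfold b. rewrite <- Nat.mul_add_distr_l. f_equal. lia. }
  split.
  - intros H.
    assert (Hs : forall p, exists z, f z = p).
    { intros p. destruct (classic (exists q, q <> p)) as [[q Hq]|Hc].
      2:{ exists p. apply NNPP; intro Hn; apply Hc; exists (f p); auto. }
      assert (Hc : d p q > 0).
      { destruct (metric_nonneg d Hm p q) as [h|h]; auto.
        exfalso; apply Hq; symmetry; apply (metric_eq0 d Hm); auto. }
      apply (img_closed d f HX Hf). intros eps He.
      set (eta := Rmin eps (d p q) / 2).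
      assert (0 < Rmin eps (d p q)) by (apply Rmin_glb_lt; lra).
      pose proof (Rmin_l eps (d p q)). pose proof (Rmin_r eps (d p q)).
      destruct (H (fun i => match i with 0%nat => p | _ => q end) eta ltac:(unfold eta; lra))
        as [u [[n [v [[z Hz] Hu]]] Hd]].
      pose proof (Hd 0%nat ltac:(lia)) as D0. pose proof (Hd 1%nat ltac:(lia)) as D1.
      simpl in D0, D1. subst u. rewrite !iter_prodmap, !Hz in *.
      destruct n as [|m].
      + simpl in D0, D1. exfalso.
        pose proof (metric_triangle d Hm p z q). rewrite (metric_sym d Hm p z) in H3.
        unfold eta in *. lra.
      + destruct (S m * a 0)%nat as [|k] eqn:E. { simpl in E; lia. }
        exists (Nat.iter k f z). simpl in D0. rewrite (metric_sym d Hm). unfold eta in *. lra. }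
    assert (Horb : forall (y : nat -> X) eps k, eps > 0 -> exists z n, (k <= n)%nat /\
              forall i, (i < S r)%nat -> d (Nat.iter (n * a i) f z) (y i) < eps).
    { intros y eps k He.
      destruct (fchoice (fun i p => Nat.iter (k * a i)%nat f p = y i)) as [p Hp].
      { intro i; apply surj_iter; auto. }
      assert (Hm' : forall i e e', 0 < e' <= e ->
        (forall w, d (p i) w < e -> d (Nat.iter (k * a i)%nat f (p i)) (Nat.iter (k * a i)%nat f w) < eps) ->
        (forall w, d (p i) w < e' -> d (Nat.iter (k * a i)%nat f (p i)) (Nat.iter (k * a i)%nat f w) < eps)).
      { intros i e e' [h1 h2] Hq w Hw. apply Hq; lra. }
      assert (Hb : forall i, (i < S r)%nat -> exists e, e > 0 /\
        forall w, d (p i) w < e -> d (Nat.iter (k * a i)%nat f (p i)) (Nat.iter (k * a i)%nat f w) < eps).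
      { intros i _. apply (cont_iter d f Hf); auto. }
      destruct (fin_delta (S r) _ Hm' Hb) as [del [Hdel Hdl]].
      destruct (H p del Hdel) as [u [[n [v [[z Hz] Hu]]] Hd]].
      exists z, (k + n)%nat. split. lia. intros i Hi.
      rewrite Nat.mul_add_distr_r, iter_add, <- Hp, (metric_sym d Hm).
      apply Hdl; auto. rewrite (metric_sym d Hm). specialize (Hd i Hi).
      subst u. rewrite iter_prodmap, Hz in Hd. exact Hd. }
    destruct (fchoice (fun k (F : list X) => forall x, exists p, In p F /\ d p x < / INR (S k)))
      as [Fs HFs].
    { intro k. apply finite_net; auto. apply inv_pos. }
    set (P := fun k (t : nat -> X) x => exists n, (k <= n)%nat /\
           forall i, (i < r)%nat -> d (Nat.iter (n * b i)%nat f x) (t i) < / INR (S k)).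
    set (G := fun k x => forall t, In t (tuples x0 (Fs k) r) -> P k t x).
    assert (HopP : forall k t, op d (P k t)).
    { intros k t x [n [Hn Hx]].
      destruct (op_forall_lt d (fun i x => d (Nat.iter (n * b i)%nat f x) (t i) < / INR (S k)) r
        (fun i _ => op_iter d Hm f Hf _ _ _) x Hx) as [e [He He']].
      exists e; split; auto. intros y Hy. exists n; split; auto. }
    assert (HdnP : forall k t, dn d (P k t)).
    { intros k t x rho Hrho.
      destruct (Horb (fun i => match i with 0%nat => x | S i => t i end)
                  (Rmin rho (/ INR (S k))) k) as [z [n [Hn Hz]]].
      { apply Rmin_glb_lt; [lra | apply inv_pos]. }
      pose proof (Rmin_l rho (/ INR (S k))). pose proof (Rmin_r rho (/ INR (S k))).
      exists (Nat.iter (n * a 0)%nat f z). split.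
      - rewrite (metric_sym d Hm). specialize (Hz 0%nat ltac:(lia)). cbv beta iota in Hz. lra.
      - exists n; split; auto. intros i Hi. rewrite <- iter_add, Hab by auto.
        specialize (Hz (S i) ltac:(lia)). cbv beta iota in Hz. lra. }
    destruct (baire d x0 HX G) as [x Hx].
    { intro k. apply op_list. intros; apply HopP. }
    { intro k. apply dn_list; auto. }
    exists x. intros z eps He N.
    destruct (inv_small (eps/2) ltac:(lra)) as [M HM].
    set (k := Nat.max N M).
    destruct (tuples_net d x0 (Fs k) _ (HFs k) r z) as [t [Ht Htd]].
    destruct (Hx k t Ht) as [n [Hn Hnd]].
    exists n. split. lia. intros i Hi. rewrite iter_prodmap.
    specialize (Hnd i Hi). specialize (Htd i Hi). specialize (HM k ltac:(lia)).
    pose proof (metric_triangle d Hm (Nat.iter (n * b i)%nat f x) (t i) (z i)).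
    fold b. lra.
  - intros [x Htr]. fold b in Htr.
    assert (Hs : forall p, exists z, f z = p).
    { intros p. apply (img_closed d f HX Hf). intros eps He.
      destruct (Htr (fun _ => p) eps He 1%nat) as [n [Hn Hd]].
      specialize (Hd 0%nat ltac:(lia)). rewrite iter_prodmap in Hd.
      assert (a 0 < a 1)%nat by (apply Ha; lia).
      destruct (n * b 0)%nat as [|k] eqn:E. { unfold b in E. nia. }
      exists (Nat.iter k f x). rewrite (metric_sym d Hm). exact Hd. }
    intros y eps He.
    destruct (Htr (fun _ => y 0%nat) eps He 0%nat) as [n0 [_ H0]].
    specialize (H0 0%nat ltac:(lia)). rewrite iter_prodmap in H0.
    set (kk := (n0 * b 0)%nat) in H0.
    destruct (fchoice (fun i p => Nat.iter kk f p = y (S i))) as [p Hp].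
    { intro i; apply surj_iter; auto. }
    assert (Hm' : forall i e e', 0 < e' <= e ->
      (forall w, d (p i) w < e -> d (Nat.iter kk f (p i)) (Nat.iter kk f w) < eps) ->
      (forall w, d (p i) w < e' -> d (Nat.iter kk f (p i)) (Nat.iter kk f w) < eps)).
    { intros i e e' [h1 h2] Hq w Hw. apply Hq; lra. }
    assert (Hb : forall i, (i < r)%nat -> exists e, e > 0 /\
      forall w, d (p i) w < e -> d (Nat.iter kk f (p i)) (Nat.iter kk f w) < eps).
    { intros i _. apply (cont_iter d f Hf); auto. }
    destruct (fin_delta r _ Hm' Hb) as [del [Hdel Hdl]].
    destruct (Htr p del Hdel 0%nat) as [n [_ Hn]].
    destruct (surj_iter f Hs (n * a 0)%nat (Nat.iter kk f x)) as [z Hz].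
    exists (Nat.iter n (prodmap a f) (fun _ => z)). split.
    { exists n, (fun _ => z). split; [exists z; reflexivity | reflexivity]. }
    intros i Hi. rewrite iter_prodmap. destruct i as [|i].
    + rewrite Hz. exact H0.
    + rewrite <- (Hab i n) by lia. rewrite iter_add, Hz, iter_swap, <- Hp, (metric_sym d Hm).
      apply Hdl. lia. specialize (Hn i ltac:(lia)). rewrite iter_prodmap in Hn.
      rewrite (metric_sym d Hm). exact Hn.
Qed.
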